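(* Let $M$ be a finite abelian group, $c\in\hat{M}$ with $c^2=1$, and $i\colon\hat{M}\setminus\{c\}\to\hat{M}\setminus\{1\}$ a bijection with $i(x)=x\,i(x^{-1})$ for all $x\ne c$. Let $F=\hat{M}\sqcup\{0\}$ with multiplication extending that of $\hat{M}$ by $0\cdot x=x\cdot0=0$, and with the operation $\oplus$ for which $0$ is the identity and, for $x,y\ne0$, $x\oplus y=0$ if $x=cy$ and $x\oplus y=x\,i(x/y)^{-1}$ otherwise. Then: (a) $\oplus$ is commutative; (b) $z(x\oplus y)=(zx)\oplus(zy)$ for all $x,y,z\in F$; (c) for every $x\in F$, $x\oplus cx=0$.
   Context: $\hat{M}$ is the Pontryagin dual of $M$, written multiplicatively with identity $1$. *)

(* Defs.v *)
From mathcomp Require Import all_boot all_fingroup.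
Set Implicit Arguments. Unset Strict Implicit. Unset Printing Implicit Defensive.

(* The group \hat{M} is represented by a finite group [gT] (assumed abelian
   in the theorem).  F = \hat{M} ⊔ {0} is represented by [option gT],
   with [None] playing the role of 0. *)

Local Open Scope group_scope.

Definition mulF (gT : finGroupType) (x y : option gT) : option gT :=
  match x, y with
  | Some a, Some b => Some (a * b)
  | _, _ => None
  end.

Definition oplusF (gT : finGroupType) (c : gT) (i : gT -> gT)
    (x y : option gT) : option gT :=
  match x, y with
  | None, _ => y
  | _, None => x
  | Some a, Some b =>
      if a == c * b then None else Some (a * (i (a * b^-1))^-1)
  end.

(* Main.v *)
Require Import Defs.
From mathcomp Require Import all_boot all_fingroup.

Local Open Scope group_scope.

Theorem mainTheorem9 (gT : finGroupType) (hab : abelian [set: gT])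
    (c : gT) (hc : c ^+ 2 = 1) (i : gT -> gT)
    (i_inj : {in [pred x | x != c] &, injective i})
    (i_into : forall x, x != c -> i x != 1)
    (i_onto : forall y, y != 1 -> exists2 x, x != c & i x = y)
    (i_eq : forall x, x != c -> i x = x * i x^-1) :
  [/\ (forall x y : option gT, oplusF c i x y = oplusF c i y x),
      (forall x y z : option gT,
          mulF z (oplusF c i x y) = oplusF c i (mulF z x) (mulF z y))
    & (forall x : option gT, oplusF c i x (mulF (Some c) x) = None)].
Proof.
have comm : forall x y : gT, x * y = y * x.
  by move=> x y; apply: (centsP hab); rewrite inE.
have cc : c * c = 1 by rewrite -hc expgS expg1.
have ceq : forall a b : gT, (a == c * b) = (b == c * a).
  move=> a b; apply/eqP/eqP => ->; by rewrite mulgA cc mul1g.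
have cdiv : forall a b : gT, (a * b^-1 == c) = (a == c * b).
  move=> a b; apply/eqP/eqP => [<-|->]; first by rewrite -mulgA mulVg mulg1.
  by rewrite -mulgA mulgV mulg1.
split.
- case=> [a|] [b|] //=; rewrite ceq; case: eqP => // /eqP.
  rewrite -cdiv => H; congr Some.
  rewrite (i_eq _ H) invMg invMg invgK !mulgA.
  set j := i _.
  by rewrite (comm b j^-1) -!mulgA (comm a b^-1) mulKVg comm.
- move=> [a|] [b|] [w|] //=.
  have e1 : (w * a == c * (w * b)) = (a == c * b).
    rewrite mulgA (comm c w) -mulgA.
    by apply/eqP/eqP => [/mulgI|->].
  have e2 : w * a * (w * b)^-1 = a * b^-1.
    by rewrite invMg mulgA (comm _ w^-1) !mulgA mulVg mul1g.
  by rewrite e1 e2; case: eqP => //; rewrite mulgA.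
- case=> [a|] //=; by rewrite mulgA cc mul1g eqxx.
Qed.
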